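(* Let $U\subset\mathbb{R}^2$ be open, let $x:U\to\mathbb{R}^3$ be smooth, let $\xi:U\to S^2$ be a proper frontal such that the line congruence $\{x,\xi\}$ is normal, and let $\Omega$ be a tangent moving basis of $\xi$ with $D\xi=\Omega\Delta_\Omega^T$ and $\delta_\Omega=\det\Delta_\Omega$. Then the equation of principal surfaces is a multiple by $\delta_\Omega$ of the equation of developable surfaces; more precisely, $$\Delta_\Omega\,\mathbf{P}\,\mathrm{adj}(\boldsymbol{\mathcal{II}}_\Omega)^T\Delta_\Omega\,\boldsymbol{\mathcal{I}}_\Omega\,\Delta_\Omega^T=\delta_\Omega\,\mathbf{P}\,\mathrm{adj}(\boldsymbol{\mathcal{II}}_\Omega)\,\boldsymbol{\mathcal{I}}_\Omega\,\Delta_\Omega^T\quad\text{on }U,$$ where $\mathbf{P}=\begin{pmatrix}0&1\\-1&0\end{pmatrix}$.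
   Context: A frontal is a smooth map $f:U\to\mathbb{R}^3$ admitting locally a smooth unit vector field orthogonal to $f_{u_1},f_{u_2}$; proper means its singular set $\Sigma(f)$ (points where $f$ is not immersive) has empty interior. A tangent moving basis of $\xi$ is a smooth $\Omega=(w_1\ w_2):U\to M_{3\times2}(\mathbb{R})$ with linearly independent columns whose span contains $\xi_{u_1},\xi_{u_2}$; then $D\xi=\Omega\Delta_\Omega^T$ for a unique smooth $\Delta_\Omega$ and $\Sigma(\xi)=\delta_\Omega^{-1}(0)$. $\boldsymbol{\mathcal{I}}_\Omega=\Omega^T\Omega$, $\boldsymbol{\mathcal{II}}_\Omega=-\Omega^TDx$, $\mathrm{adj}$ is the adjugate. The congruence $\{x,\xi\}$ (lines through $x(u)$ in direction $\xi(u)$) is normal if there is a surface $S'$ whose normal lines are parallel to the lines of the congruence. For a curve $(u_1(t),u_2(t))$ in $U$, the equation of principal surfaces of a normal congruence is $(u_1',u_2')\,\Delta_\Omega\mathbf{P}\,\mathrm{adj}(\boldsymbol{\mathcal{II}}_\Omega)^T\Delta_\Omega\boldsymbol{\mathcal{I}}_\Omega\Delta_\Omega^T(u_1',u_2')^T=0$ (its solutions are the curves whose congruence surfaces $x+v\xi$ have, wherever $\Delta_\Omega^T(u_1',u_2')^T\neq0$, velocity direction extremizing $b\mapsto \frac{b^T\boldsymbol{\mathcal{II}}_\Omega\mathrm{adj}(\Delta_\Omega^T)b}{b^T\boldsymbol{\mathcal{I}}_\Omega b}$), and the equation of developable surfaces is $(u_1',u_2')\,\mathbf{P}\,\mathrm{adj}(\boldsymbol{\mathcal{II}}_\Omega)\boldsymbol{\mathcal{I}}_\Omega\Delta_\Omega^T(u_1',u_2')^T=0$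 (its solutions are the curves whose congruence surfaces are developable). *)

(* Defs.v *)
From HB Require Import structures.
From mathcomp Require Import all_boot all_order all_algebra.
From mathcomp Require Import all_classical all_reals all_analysis.
Set Implicit Arguments. Unset Strict Implicit. Unset Printing Implicit Defensive.
Import Order.TTheory GRing.Theory Num.Theory.
Import numFieldNormedType.Exports.
Local Open Scope classical_set_scope.
Local Open Scope ring_scope.

Section Defs.
Variable R : realType.

Definition pt := 'rV[R]_2.

Definition ebasis (j : 'I_2) : pt := delta_mx 0 j.

Fixpoint iterD (W : normedModType R) (vs : seq pt) (f : pt -> W) : pt -> W :=
  match vs with
  | [::] => f
  | v :: vs' => fun p => derive (iterD vs' f) p v
  end.

Definition smooth_on (W : normedModType R) (U : set pt) (f : pt -> W) :=
  forall (vs : seq pt) (p : pt), U p -> differentiable (iterD vs f) p.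

Definition partial (W : normedModType R) (j : 'I_2) (f : pt -> W) (p : pt) : W :=
  derive f p (ebasis j).

Definition dot (a b : 'rV[R]_3) : R := (a *m b^T) 0 0.

Definition jac (f : pt -> 'rV[R]_3) (p : pt) : 'M[R]_(3, 2) :=
  \matrix_(i < 3, j < 2) partial j f p 0 i.

Definition frontal (U : set pt) (f : pt -> 'rV[R]_3) :=
  smooth_on U f /\
  forall p, U p -> exists V : set pt, [/\ open V, V p, V `<=` U &
    exists nu : pt -> 'rV[R]_3, smooth_on V nu /\
      forall u, V u -> dot (nu u) (nu u) = 1 /\
        forall j : 'I_2, dot (nu u) (partial j f u) = 0].

Definition singular_set (U : set pt) (f : pt -> 'rV[R]_3) : set pt :=
  [set u | U u /\ \rank (jac f u) != 2%N].

Definition proper_frontal (U : set pt) (f : pt -> 'rV[R]_3) :=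
  frontal U f /\ interior (singular_set U f) = set0.

Definition tangent_moving_basis (U : set pt) (xi : pt -> 'rV[R]_3)
    (Om : pt -> 'M[R]_(3, 2)) :=
  smooth_on U Om /\
  forall u, U u -> \rank (Om u) = 2%N /\ ((jac xi u)^T <= (Om u)^T)%MS.

(* The line congruence {x, xi} is normal: there is a surface
   S' = x + t xi (t smooth) to which xi is normal. *)
Definition normal_congruence (U : set pt) (x xi : pt -> 'rV[R]_3) :=
  exists t : pt -> R, smooth_on U t /\
    forall u, U u -> forall j : 'I_2,
      dot (xi u) (partial j (fun v => x v + t v *: xi v) u) = 0.

Definition Iform (Om : pt -> 'M[R]_(3, 2)) (u : pt) : 'M[R]_2 :=
  (Om u)^T *m Om u.

Definition IIform (Om : pt -> 'M[R]_(3, 2)) (x : pt -> 'rV[R]_3) (u : pt)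
  : 'M[R]_2 := - ((Om u)^T *m jac x u).

Definition Pmx : 'M[R]_2 :=
  \matrix_(i < 2, j < 2)
    (if (i == 0 :> nat) && (j == 1 :> nat) then 1
     else if (i == 1 :> nat) && (j == 0 :> nat) then -1 else 0).

End Defs.

(* Main.v *)
Require Import Defs.
From HB Require Import structures.
From mathcomp Require Import all_boot all_order all_algebra.
From mathcomp Require Import all_classical all_reals all_analysis.
From mathcomp Require Import ring lra.
Import Order.TTheory GRing.Theory Num.Theory.
Import numFieldNormedType.Exports.
Local Open Scope classical_set_scope.
Local Open Scope ring_scope.

Section A.
Variable R : comNzRingType.
Lemma det2 (A : 'M[R]_2) : \det A = A 0 0 * A 1 1 - A 0 1 * A 1 0.
Proof.
rewrite (expand_det_row _ 0) !big_ord_recl big_ord0 /cofactor !det_mx11 !mxE /=.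
have l1 : lift (0:'I_2) (0:'I_1) = 1 by apply/val_inj.
have l2 : lift (ord0:'I_2) (ord0:'I_1) = 1 by apply/val_inj.
have l3 : lift (lift (ord0:'I_2) (ord0 : 'I_1)) (0:'I_1) = 0 by apply/val_inj.
rewrite ?l1 ?l2 ?l3 /=.
rewrite (_ : lift 1 0 = 0 :> 'I_2); last by apply/val_inj.
rewrite /= expr0 expr1 !mul1r.
rewrite /=. ring.
Qed.
Lemma adj2 (A : 'M[R]_2) i j : \adj A i j =
  (-1) ^+ (i + j) * A (if j == 0 then 1 else 0) (if i == 0 then 1 else 0).
Proof.
rewrite !mxE /cofactor det_mx11 !mxE addnC; congr (_ * A _ _);
 apply/val_inj; case: i => [[|[|i]] Hi] //; case: j => [[|[|j]] Hj] //=.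
Qed.
End A.
Section B.
Variable R : realType.
Local Notation Pm := (Pmx R).
Lemma sum2 (F : 'I_2 -> R) : \sum_k F k = F 0 + F 1.
Proof.
rewrite !big_ord_recl big_ord0 addr0; congr (_ + F _); exact/val_inj.
Qed.
Lemma ord2 (i : 'I_2) : i = 0 \/ i = 1.
Proof. case: i => [[|[|i]] Hi] //; [left|right]; exact/val_inj. Qed.
Lemma cof2 (C : 'M[R]_2) i j : cofactor C i j =
  (-1) ^+ (i + j) * C (if i == 0 then 1 else 0) (if j == 0 then 1 else 0).
Proof.
rewrite /cofactor det_mx11 !mxE; congr (_ * C _ _);
 apply/val_inj; case: i => [[|[|i]] Hi] //; case: j => [[|[|j]] Hj] //=.
Qed.
Lemma key (D C : 'M[R]_2) : (D *m C) 0 1 = (D *m C) 1 0 ->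
  D *m Pm *m (\adj C)^T *m D = \det D *: (Pm *m \adj C).
Proof.
rewrite !mxE !sum2 => h.
apply/matrixP => i j; rewrite !mxE !sum2 !mxE !sum2 !mxE !sum2 !mxE.
rewrite !cof2 det2 /=.
move: h; set X := (X in X = _ -> _); set Y := (Y in _ = Y -> _) => h.
have [->|->] := ord2 i; have [->|->] := ord2 j; rewrite /= ?expr0 ?expr1 ?expr2;
 apply/eqP; rewrite -subr_eq0; apply/eqP.
- transitivity (- D 0 0 * (X - Y)); [rewrite /X /Y; ring | by rewrite h subrr mulr0].
- transitivity (- D 0 1 * (X - Y)); [rewrite /X /Y; ring | by rewrite h subrr mulr0].
- transitivity (- D 1 0 * (X - Y)); [rewrite /X /Y; ring | by rewrite h subrr mulr0].
- transitivity (- D 1 1 * (X - Y)); [rewrite /X /Y; ring | by rewrite h subrr mulr0].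
Qed.
End B.

Section S.
Variable R : realType.
Notation V := 'rV[R]_2.

Lemma line_fun (g : V -> R) (p v : V) s :
  (fun h : R => h^-1 *: (((fun s : R => g (s *: v + p)) \o shift s) (h *: 1)
       - (fun s : R => g (s *: v + p)) s)) =
  (fun h : R => h^-1 *: ((g \o shift (s *: v + p)) (h *: v) - g (s *: v + p))).
Proof.
apply: funext => h /=; congr (_ *: (g _ - _)).
by rewrite /= scalerDl [h *: 1]mulr1 addrA.
Qed.

Lemma line_derivable (g : V -> R) (p v : V) s :
  derivable g (s *: v + p) v -> derivable (fun s : R => g (s *: v + p)) s 1.
Proof. by rewrite /derivable line_fun. Qed.

Lemma line_derive (g : V -> R) (p v : V) s :
  derive (fun s : R => g (s *: v + p)) s 1 = derive g (s *: v + p) v.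
Proof. by rewrite /derive line_fun. Qed.

Lemma line_is_derive (g : V -> R) (p v : V) s :
  differentiable g (s *: v + p) ->
  is_derive s 1 (fun s : R => g (s *: v + p)) (derive g (s *: v + p) v).
Proof.
move=> dg; apply: DeriveDef; last exact: line_derive.
exact/line_derivable/diff_derivable.
Qed.

Lemma line_cont (g : V -> R) (p v : V) s :
  differentiable g (s *: v + p) -> {for s, continuous (fun s : R => g (s *: v + p))}.
Proof.
move=> dg; apply: differentiable_continuous; apply/derivable1_diffP.
exact/line_derivable/diff_derivable.
Qed.
Lemma half (g gv F : V -> R) (P : V -> Prop) (u v w : V) (h : R) :
  0 < h ->
  (forall s r, 0 <= s <= h -> 0 <= r <= h -> P (s *: v + (r *: w + u))) ->
  (forall p, P p -> differentiable g p) ->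
  (forall p, P p -> derive g p v = gv p) ->
  (forall p, P p -> differentiable gv p) ->
  (forall p, P p -> derive gv p w = F p) ->
  exists s r, [/\ 0 <= s <= h, 0 <= r <= h &
    g (h *: v + (h *: w + u)) - g (h *: w + u) - (g (h *: v + u) - g u)
      = h ^+ 2 * F (s *: v + (r *: w + u))].
Proof.
move=> h0 box dg dgv dgv' dF.
have P0 s : 0 <= s <= h -> P (s *: v + u).
  by move=> sh; have := box s 0 sh; rewrite lexx ltW // scale0r add0r; apply.
have Ph s : 0 <= s <= h -> P (s *: v + (h *: w + u)).
  by move=> sh; apply: box => //; rewrite lexx ltW.
pose phi := (fun s : R => g (s *: v + (h *: w + u))) - (fun s : R => g (s *: v + u)).
have [c cin Hc] : exists2 c, c \in `]0, h[ & phi h - phi 0 =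
    (gv (c *: v + (h *: w + u)) - gv (c *: v + u)) * (h - 0).
  apply: MVT => //.
    move=> s; rewrite in_itv /= => /andP[s0 sh].
    have sh' : 0 <= s <= h by rewrite !ltW.
    have := is_deriveB (line_is_derive _ _ _ _ (dg _ (Ph _ sh'))) (line_is_derive _ _ _ _ (dg _ (P0 _ sh'))).
    by rewrite (dgv _ (Ph _ sh')) (dgv _ (P0 _ sh')).
  apply: continuous_in_subspaceT => s; rewrite inE /= in_itv /= => sh.
  apply: continuousB; [exact: line_cont _ _ _ _ (dg _ (Ph _ sh))|exact: line_cont _ _ _ _ (dg _ (P0 _ sh))].
move: cin; rewrite in_itv /= => /andP[c0 ch].
have ch' : 0 <= c <= h by rewrite !ltW.
have Pc r : 0 <= r <= h -> P (r *: w + (c *: v + u)).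
  by move=> rh; rewrite addrCA; apply: box.
pose psi := fun r : R => gv (r *: w + (c *: v + u)).
have [d din Hd] : exists2 d, d \in `]0, h[ & psi h - psi 0 =
    F (d *: w + (c *: v + u)) * (h - 0).
  apply: MVT => //.
    move=> r; rewrite in_itv /= => /andP[r0 rh].
    have rh' : 0 <= r <= h by rewrite !ltW.
    have := line_is_derive _ _ _ _ (dgv' _ (Pc _ rh')).
    by rewrite (dF _ (Pc _ rh')).
  apply: continuous_in_subspaceT => r; rewrite inE /= in_itv /= => rh.
  exact: line_cont _ _ _ _ (dgv' _ (Pc _ rh)).
move: din; rewrite in_itv /= => /andP[d0 dh].
exists c, d; split => //; first by rewrite !ltW.
have E1 : phi h - phi 0 = (g (h *: v + (h *: w + u)) - g (h *: v + u))
   - (g (h *: w + u) - g u).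
  rewrite /phi !(_ : forall (f1 f2 : R -> R) (y : R), (f1 - f2) y = f1 y - f2 y) //=.
  by rewrite !scale0r !add0r.
have E2 : psi h - psi 0 = gv (h *: w + (c *: v + u)) - gv (c *: v + u).
  by rewrite /psi /= !scale0r !add0r.
rewrite E1 in Hc; rewrite E2 in Hd; rewrite subr0 in Hc Hd.
rewrite (addrCA (c *: v)) Hd in Hc.
have -> : g (h *: v + (h *: w + u)) - g (h *: w + u) - (g (h *: v + u) - g u)
  = g (h *: v + (h *: w + u)) - g (h *: v + u) - (g (h *: w + u) - g u) by ring.
rewrite Hc addrCA expr2; ring.
Qed.
Lemma box_ball (u v w : V) (r h : R) : 0 < h -> h * (`|v| + `|w| + 1) <= r ->
  forall s t, 0 <= s <= h -> 0 <= t <= h -> `|u - (s *: v + (t *: w + u))| < r.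
Proof.
move=> h0 hr s t /andP[s0 sh] /andP[t0 th].
have -> : u - (s *: v + (t *: w + u)) = - (s *: v + t *: w).
  by rewrite addrA opprD addrCA subrr addr0.
rewrite normrN; apply: (le_lt_trans (ler_normD _ _)); rewrite !normrZ.
rewrite (ger0_norm s0) (ger0_norm t0).
have nv := normr_ge0 v; have nw := normr_ge0 w.
have h1 : s * `|v| <= h * `|v| by rewrite ler_wpM2r.
have h2 : t * `|w| <= h * `|w| by rewrite ler_wpM2r.
lra.
Qed.

Lemma schwarz (U : set V) (g gv gw Fvw Fwv : V -> R) (u v w : V) :
  open U -> U u ->
  (forall p, U p -> differentiable g p) ->
  (forall p, U p -> derive g p v = gv p) ->
  (forall p, U p -> derive g p w = gw p) ->
  (forall p, U p -> differentiable gv p) ->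
  (forall p, U p -> differentiable gw p) ->
  (forall p, U p -> derive gv p w = Fvw p) ->
  (forall p, U p -> derive gw p v = Fwv p) ->
  {for u, continuous Fvw} -> {for u, continuous Fwv} ->
  Fvw u = Fwv u.
Proof.
move=> oU Uu dg gvE gwE dgv dgw FvwE FwvE cv cw.
case: (eqVneq (Fvw u) (Fwv u)) => // neq; exfalso.
pose e := `|Fvw u - Fwv u| / 2.
have e0 : 0 < e by rewrite divr_gt0 // normr_gt0 subr_eq0.
have N : \forall p \near u, U p /\ `|Fvw u - Fvw p| < e /\ `|Fwv u - Fwv p| < e.
  move/cvgrPdist_lt: cv => /(_ e e0) cv.
  move/cvgrPdist_lt: cw => /(_ e e0) cw.
  have nU : \forall p \near u, U p by apply: open_nbhs_nbhs.
  by near=> p; split; [near: p; exact: nU| split; near: p; [exact: cv|exact: cw]].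
move/nbhs_ballP: N => [r /= r0 Hr].
pose h := r / (`|v| + `|w| + 1).
have h0 : 0 < h by rewrite divr_gt0 // ltr_wpDl // addr_ge0.
have hr : h * (`|v| + `|w| + 1) <= r.
  by rewrite /h divfK // gt_eqF // ltr_wpDl // addr_ge0.
have hr' : h * (`|w| + `|v| + 1) <= r by rewrite (addrC `|w|).
have HP p : `|u - p| < r -> U p /\ `|Fvw u - Fvw p| < e /\ `|Fwv u - Fwv p| < e.
  by move=> up; apply: Hr; rewrite -ball_normE.
pose P := fun p => `|u - p| < r.
have [s1 [t1 [sh1 th1 H1]]] := @half g gv Fvw P u v w h h0 (box_ball u v w r h h0 hr)
  (fun p Pp => dg p (HP p Pp).1) (fun p Pp => gvE p (HP p Pp).1)
  (fun p Pp => dgv p (HP p Pp).1) (fun p Pp => FvwE p (HP p Pp).1).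
have bb : forall s t, 0 <= s <= h -> 0 <= t <= h -> P (s *: w + (t *: v + u)).
  move=> s t sh th; rewrite /P.
  exact: box_ball u w v r h h0 hr' s t sh th.
have [s2 [t2 [sh2 th2 H2]]] := @half g gw Fwv P u w v h h0 bb
  (fun p Pp => dg p (HP p Pp).1) (fun p Pp => gwE p (HP p Pp).1)
  (fun p Pp => dgw p (HP p Pp).1) (fun p Pp => FwvE p (HP p Pp).1).
have E : Fvw (s1 *: v + (t1 *: w + u)) = Fwv (s2 *: w + (t2 *: v + u)).
  apply: (mulfI (_ : h ^+ 2 != 0)); first by rewrite expf_neq0 // gt_eqF.
  rewrite -H1 -H2 (addrCA (h *: w)).
  ring.
have [_ [A1 _]] := HP _ (box_ball u v w r h h0 hr s1 t1 sh1 th1).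
have [_ [_ A2]] := HP _ (bb s2 t2 sh2 th2).
move: A1 A2 E.
set p1 := s1 *: v + (t1 *: w + u); set p2 := s2 *: w + (t2 *: v + u) => A1 A2 E.
have T : `|Fvw u - Fwv u| <= `|Fvw u - Fvw p1| + `|Fwv u - Fwv p2|.
  rewrite (distrC (Fwv u)) -E.
  rewrite {1}(_ : Fvw u - Fwv u = (Fvw u - Fvw p1) + (Fvw p1 - Fwv u)); last by ring.
  exact: ler_normD.
rewrite /e in A1 A2; lra.
Unshelve. all: by end_near.
Qed.
End S.


Section T.
Variable R : realType.
Notation V := 'rV[R]_2.

Lemma sum3 (F : 'I_3 -> R) : \sum_k F k = F 0 + F 1 + F 2%:R.
Proof.
rewrite !big_ord_recl big_ord0 addr0 addrA; congr (F _ + F _ + F _); exact/val_inj.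
Qed.

Lemma dotE (a b : 'rV[R]_3) : dot a b = \sum_k a 0 k * b 0 k.
Proof. by rewrite /dot mxE; apply: eq_bigr => k _; rewrite mxE. Qed.

Lemma isd_sum n (h : 'I_n -> V -> R) p v (dh : 'I_n -> R) :
  (forall i, is_derive p v (h i) (dh i)) ->
  is_derive p v (fun q => \sum_i h i q) (\sum_i dh i).
Proof. by move=> H; have := is_derive_sum H; rewrite fct_sumE. Qed.

Lemma isd_M (f g : V -> R) p v df dg :
  is_derive p v f df -> is_derive p v g dg ->
  is_derive p v (fun q => f q * g q) (f p * dg + g p * df).
Proof. move=> H1 H2; exact: (is_deriveM H1 H2). Qed.

Lemma isd_D (f g : V -> R) p v df dg :
  is_derive p v f df -> is_derive p v g dg ->
  is_derive p v (fun q => f q + g q) (df + dg).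
Proof. move=> H1 H2; exact: (is_deriveD H1 H2). Qed.

Lemma isd_diff (f : V -> R) p v : differentiable f p -> is_derive p v f (derive f p v).
Proof. by move=> df; apply/derivableP/diff_derivable. Qed.

Lemma comp_diff (f : V -> 'rV[R]_3) p k :
  differentiable f p -> differentiable (fun q => f q 0 k) p.
Proof.
move=> df; apply: (@differentiable_comp _ _ _ _ f (fun N : 'rV[R]_3 => N 0 k)) => //.
exact: differentiable_coord.
Qed.

Lemma comp_derive (f : V -> 'rV[R]_3) p v k :
  derivable f p v -> derive f p v 0 k = derive (fun q => f q 0 k) p v.
Proof. by move=> df; rewrite derive_mx // mxE. Qed.

Lemma comp_derive' (f : V -> 'rV[R]_3) p v k :
  differentiable f p -> derive (fun q => f q 0 k) p v = derive f p v 0 k.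
Proof. by move=> df; rewrite comp_derive //; exact: diff_derivable. Qed.

Lemma isd_comp (f : V -> 'rV[R]_3) p v k :
  differentiable f p -> is_derive p v (fun q => f q 0 k) (derive f p v 0 k).
Proof.
move=> df; rewrite comp_derive; last exact: diff_derivable.
exact/isd_diff/comp_diff.
Qed.

Lemma isd_const (U : set V) (f : V -> R) c p v df : open U -> U p ->
  (forall q, U q -> f q = c) -> is_derive p v f df -> df = 0.
Proof.
move=> oU Up f0 H.
have N : \forall q \near p, f q = cst c q.
  have nU : \forall q \near p, U q by apply: open_nbhs_nbhs.
  by near=> q; rewrite f0 //; near: q.
have H' := near_eq_is_derive N H.
by rewrite -(@derive_val _ _ _ _ _ _ _ H') derive_cst.
Unshelve. all: by end_near.
Qed.

Lemma isd_zero (U : set V) (f : V -> R) p v df : open U -> U p ->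
  (forall q, U q -> f q = 0) -> is_derive p v f df -> df = 0.
Proof. exact: isd_const. Qed.

Lemma fin_alg (a Z1 Z2 X0 X1 Y0 Y1 : 'I_3 -> R) (T : R) :
  (forall k, Z1 k = Z2 k) ->
  \sum_k (a k * Z1 k + X1 k * Y0 k) + T = 0 ->
  \sum_k (a k * Z2 k + X0 k * Y1 k) + T = 0 ->
  \sum_k Y0 k * X1 k = \sum_k Y1 k * X0 k.
Proof.
move=> Z; have -> : Z1 = Z2 by apply: funext.
move=> h1 h2; rewrite big_split /= in h1; rewrite big_split /= in h2.
have : \sum_k X1 k * Y0 k = \sum_k X0 k * Y1 k by lra.
by under eq_bigr do rewrite mulrC; under [in RHS]eq_bigr do rewrite mulrC.
Qed.

Lemma sym_key (U : set V) (x xi : V -> 'rV[R]_3) (t : V -> R) u :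
  open U -> smooth_on U x -> smooth_on U xi -> smooth_on U t ->
  (forall p, U p -> dot (xi p) (xi p) = 1) ->
  (forall p, U p -> forall j : 'I_2,
      dot (xi p) (partial j (fun v => x v + t v *: xi v) p) = 0) ->
  U u ->
  \sum_k partial 0 xi u 0 k * partial 1 x u 0 k =
  \sum_k partial 1 xi u 0 k * partial 0 x u 0 k.
Proof.
move=> oU sx sxi st unit nc Uu.
have dx p : U p -> differentiable x p := fun Up => sx [::] p Up.
have dxi p : U p -> differentiable xi p := fun Up => sxi [::] p Up.
have dt p : U p -> differentiable t p := fun Up => st [::] p Up.
have dX j p : U p -> differentiable (fun q => derive x q (ebasis R j)) p :=
  fun Up => sx [:: ebasis R j] p Up.
have dT j p : U p -> differentiable (fun q => derive t q (ebasis R j)) p :=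
  fun Up => st [:: ebasis R j] p Up.
have dXX i j p : U p -> differentiable
   (fun q => derive (fun r => derive x r (ebasis R j)) q (ebasis R i)) p :=
  fun Up => sx [:: ebasis R i; ebasis R j] p Up.
have dTT i j p : U p -> differentiable
   (fun q => derive (fun r => derive t r (ebasis R j)) q (ebasis R i)) p :=
  fun Up => st [:: ebasis R i; ebasis R j] p Up.
have A p j : U p -> \sum_k xi p 0 k * derive xi p (ebasis R j) 0 k = 0.
  move=> Up.
  have H : is_derive p (ebasis R j)
      (fun q => \sum_k xi q 0 k * xi q 0 k)
      (\sum_k (xi p 0 k * derive xi p (ebasis R j) 0 k
               + xi p 0 k * derive xi p (ebasis R j) 0 k)).
    by apply: isd_sum => k; apply: isd_M; exact: isd_comp (dxi p Up).
  have f1 : forall q, U q -> \sum_k xi q 0 k * xi q 0 k = 1.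
    by move=> q Uq; rewrite -dotE unit.
  have := @isd_const U _ 1 p (ebasis R j) _ oU Up f1 H.
  rewrite big_split /= => E.
  have : 2 * \sum_k xi p 0 k * derive xi p (ebasis R j) 0 k = 0 by lra.
  by move/eqP; rewrite mulf_eq0 pnatr_eq0 /= => /eqP.
have B p j : U p ->
    \sum_k xi p 0 k * derive x p (ebasis R j) 0 k + derive t p (ebasis R j) = 0.
  move=> Up.
  have Hk k : is_derive p (ebasis R j) (fun q => x q 0 k + t q * xi q 0 k)
      (derive x p (ebasis R j) 0 k + (t p * derive xi p (ebasis R j) 0 k
         + xi p 0 k * derive t p (ebasis R j))).
    apply: isd_D; first exact: isd_comp (dx p Up).
    by apply: isd_M; [exact: isd_diff (dt p Up)|exact: isd_comp (dxi p Up)].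
  have Ey k : (fun q => (x q + t q *: xi q) 0 k) = (fun q => x q 0 k + t q * xi q 0 k).
    by apply: funext => q; rewrite !mxE.
  have dy : derivable (fun v => x v + t v *: xi v) p (ebasis R j).
    apply/derivable_mxP => i' k'; rewrite (ord1 i') Ey.
    exact: (@ex_derive _ _ _ _ _ _ _ (Hk k')).
  have Dy k : derive (fun v => x v + t v *: xi v) p (ebasis R j) 0 k =
      derive x p (ebasis R j) 0 k + (t p * derive xi p (ebasis R j) 0 k
         + xi p 0 k * derive t p (ebasis R j)).
    by rewrite comp_derive // Ey; exact: (@derive_val _ _ _ _ _ _ _ (Hk k)).
  have := nc p Up j; rewrite dotE /partial.
  under eq_bigr do rewrite Dy.
  move=> Hn.
  have Un := unit p Up; rewrite dotE in Un.
  have Ap := A p j Up.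
  have key : \sum_k xi p 0 k * derive x p (ebasis R j) 0 k + derive t p (ebasis R j) =
     \sum_k xi p 0 k * (derive x p (ebasis R j) 0 k + (t p * derive xi p (ebasis R j) 0 k
         + xi p 0 k * derive t p (ebasis R j)))
     - t p * (\sum_k xi p 0 k * derive xi p (ebasis R j) 0 k)
     - derive t p (ebasis R j) * (\sum_k xi p 0 k * xi p 0 k - 1).
    by rewrite !sum3; ring.
  by rewrite key Hn Ap Un; ring.
have C i j : \sum_k (xi u 0 k * derive (fun q => derive x q (ebasis R j)) u (ebasis R i) 0 k
      + derive x u (ebasis R j) 0 k * derive xi u (ebasis R i) 0 k)
    + derive (fun q => derive t q (ebasis R j)) u (ebasis R i) = 0.
  apply: (@isd_zero U
    (fun q => \sum_k xi q 0 k * derive x q (ebasis R j) 0 k + derive t q (ebasis R j))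
    u (ebasis R i) _ oU Uu (fun q Uq => B q j Uq)).
  apply: isd_D; last exact: isd_diff (dT j u Uu).
  apply: isd_sum => k; apply: isd_M; first exact: isd_comp (dxi u Uu).
  exact: (@isd_comp (fun q => derive x q (ebasis R j)) u (ebasis R i) k (dX j u Uu)).
have St : derive (fun q => derive t q (ebasis R 1)) u (ebasis R 0)
        = derive (fun q => derive t q (ebasis R 0)) u (ebasis R 1).
  apply: (@schwarz R U t (fun q => derive t q (ebasis R 1))
     (fun q => derive t q (ebasis R 0))
     (fun p => derive (fun q => derive t q (ebasis R 1)) p (ebasis R 0))
     (fun p => derive (fun q => derive t q (ebasis R 0)) p (ebasis R 1))
     u (ebasis R 1) (ebasis R 0) oU Uu dt) => //.
  - exact: dT.
  - exact: dT.
  - exact/differentiable_continuous/(dTT 0 1 u Uu).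
  - exact/differentiable_continuous/(dTT 1 0 u Uu).
have Sx k : derive (fun q => derive x q (ebasis R 1)) u (ebasis R 0) 0 k
        = derive (fun q => derive x q (ebasis R 0)) u (ebasis R 1) 0 k.
  apply: (@schwarz R U (fun q => x q 0 k) (fun q => derive x q (ebasis R 1) 0 k)
     (fun q => derive x q (ebasis R 0) 0 k)
     (fun p => derive (fun q => derive x q (ebasis R 1)) p (ebasis R 0) 0 k)
     (fun p => derive (fun q => derive x q (ebasis R 0)) p (ebasis R 1) 0 k)
     u (ebasis R 1) (ebasis R 0) oU Uu).
  - by move=> p Up; exact: comp_diff (dx p Up).
  - by move=> p Up; exact: comp_derive' (dx p Up).
  - by move=> p Up; exact: comp_derive' (dx p Up).
  - by move=> p Up; exact: comp_diff (dX 1 p Up).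
  - by move=> p Up; exact: comp_diff (dX 0 p Up).
  - by move=> p Up; exact: comp_derive' (dX 1 p Up).
  - by move=> p Up; exact: comp_derive' (dX 0 p Up).
  - exact/differentiable_continuous/comp_diff/(dXX 0 1 u Uu).
  - exact/differentiable_continuous/comp_diff/(dXX 1 0 u Uu).
have C01 := C 0 1; have C10 := C 1 0.
rewrite St in C01.
exact: (@fin_alg (fun k => xi u 0 k)
  (fun k => derive (fun q => derive x q (ebasis R 1)) u (ebasis R 0) 0 k)
  (fun k => derive (fun q => derive x q (ebasis R 0)) u (ebasis R 1) 0 k)
  (fun k => derive x u (ebasis R 0) 0 k) (fun k => derive x u (ebasis R 1) 0 k)
  (fun k => derive xi u (ebasis R 0) 0 k) (fun k => derive xi u (ebasis R 1) 0 k)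
  _ Sx C01 C10).
Qed.
End T.
Theorem theorem4p1 (R : realType) (U : set (pt R))
    (x xi : pt R -> 'rV[R]_3) (Om : pt R -> 'M[R]_(3, 2))
    (Delta : pt R -> 'M[R]_2) :
  open U ->
  smooth_on U x ->
  (forall u, U u -> dot (xi u) (xi u) = 1) ->
  proper_frontal U xi ->
  normal_congruence U x xi ->
  tangent_moving_basis U xi Om ->
  (forall u, U u -> jac xi u = Om u *m (Delta u)^T) ->
  forall u, U u ->
    Delta u *m Pmx R *m (\adj (IIform Om x u))^T *m Delta u
      *m Iform Om u *m (Delta u)^T
    = \det (Delta u) *:
        (Pmx R *m \adj (IIform Om x u) *m Iform Om u *m (Delta u)^T).
Proof.
move=> oU sx unit [[sxi _] _] [t [st nc]] _ HD u Uu.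
have S := @sym_key R U x xi t u oU sx sxi st unit nc Uu.
have Hsym : (Delta u *m IIform Om x u) 0 1 = (Delta u *m IIform Om x u) 1 0.
  have E : Delta u *m (Om u)^T = (jac xi u)^T by rewrite (HD u Uu) trmx_mul trmxK.
  rewrite /IIform mulmxN mulmxA E !mxE; congr (- _).
  under eq_bigr do rewrite !mxE.
  under [in RHS]eq_bigr do rewrite !mxE.
  exact: S.
by rewrite (@key R _ _ Hsym) -!scalemxAl.
Qed.
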